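(* There is a constant $A$ such that, for all sufficiently large $n$, every big irreducible representation $\lambda$ of $S_n$ and every $\pi\in S_n$ with $t(\pi) > \sqrt{n}\log n$ obey $\left|\chi_\lambda(\pi)/d_\lambda\right| \le A^{t(\pi)} n^{-t(\pi)/2}$.
   Context: An irreducible representation $\lambda$ of $S_n$ with character $\chi_\lambda$ and dimension $d_\lambda$ is big if $d_\lambda > e^{-\sqrt{n}\log n}\sqrt{n!}$ (natural logarithm). For $\pi\in S_n$, $t(\pi)$ is the minimum number of transpositions whose product is $\pi$. *)

(* Defs.v *)
From HB Require Import structures.
From mathcomp Require Import all_boot all_order all_algebra all_fingroup all_solvable all_field all_character.
From mathcomp Require Import reals sequences exp.
Set Implicit Arguments. Unset Strict Implicit. Unset Printing Implicit Defensive.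
Import Order.TTheory GRing.Theory Num.Theory.

Definition Sn (n : nat) : {group 'S_n} := [set: 'S_n]%G.

Definition transp_prod (n k : nat) (pi : 'S_n) : bool :=
  [exists ts : k.-tuple ('I_n * 'I_n),
     all dpair ts && (pi == (\prod_(t <- ts) tperm t.1 t.2)%g)].

Lemma transp_prod_exists (n : nat) (pi : 'S_n) : exists k, transp_prod k pi.
Proof.
case: (prod_tpermP pi) => ts def_pi dts.
exists (size ts); apply/existsP; exists (in_tuple ts).
by rewrite /= dts def_pi eqxx.
Qed.

Definition tmin (n : nat) (pi : 'S_n) : nat := ex_minn (transp_prod_exists pi).

(* dimension d_lambda of the irreducible representation with character 'chi_i
   (the value of the character at the identity, a natural number). *)
Definition dim_irr (n : nat) (i : Iirr (Sn n)) : nat := Num.truncn ('chi_i 1%g).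

Definition big (R : realType) (n : nat) (i : Iirr (Sn n)) : Prop :=
  (expR (- (Num.sqrt (n%:R : R) * ln (n%:R : R))) * Num.sqrt ((n `!)%:R : R)
     < (dim_irr i)%:R)%R.

(* Main.v *)
Require Import Defs.
From HB Require Import structures.
From mathcomp Require Import all_boot all_order all_algebra all_fingroup all_solvable all_field all_character.
From mathcomp Require Import reals sequences exp.
From mathcomp Require Import zify.
Import Order.TTheory GRing.Theory Num.Theory.
Set Implicit Arguments. Unset Strict Implicit. Unset Printing Implicit Defensive.
Section Comb.
Variable n : nat.
Implicit Types (p q : 'S_n).

Definition mv p : {set 'I_n} := [set z | p z != z].

Lemma moved_prod (ts : seq ('I_n * 'I_n)) :
  #|mv (\prod_(t <- ts) tperm t.1 t.2)%g| <= 2 * size ts.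
Proof.
elim: ts => [|[a b] ts IH]; first by rewrite big_nil muln0 leqn0 cards_eq0; apply/eqP/setP=> z; rewrite !inE perm1 eqxx.
rewrite big_cons /=.
set q := (\prod_(_ <- _) _)%g in IH *.
apply: (@leq_trans (#|[set a; b]| + #|mv q|)).
  apply: leq_trans (leq_card_setU _ _).
  apply: subset_leq_card; apply/subsetP => z; rewrite !inE permM.
  case: tpermP => [->|->|za zb]; rewrite ?eqxx ?orbT //.
  by move=> ->; rewrite orbT.
rewrite mulnS; apply: leq_add => //; rewrite cards2; by case: (a != b).
Qed.

Lemma transp_prod_cons k q x y : transp_prod k q -> x != y ->
  transp_prod k.+1 (tperm x y * q)%g.
Proof.
move=> /existsP[ts /andP[dts /eqP ->]] xy; apply/existsP.
exists [tuple of (x, y) :: ts]; rewrite /= xy dts /=.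
by rewrite big_cons.
Qed.

Lemma transp_prod_size k q : transp_prod k q -> #|mv q| <= 2 * k.
Proof.
move=> /existsP[ts /andP[_ /eqP ->]].
by have := moved_prod ts; rewrite size_tuple.
Qed.

Lemma porbit_sub p q w : (forall z, q z \in porbit p z) ->
  forall z, z \in porbit q w -> z \in porbit p w.
Proof.
move=> H z /porbitP[i ->]; elim: i => [|i IH]; first by rewrite expg0 perm1 porbit_id.
rewrite expgSr permM.
have /eqP E : porbit p ((q ^+ i)%g w) == porbit p w by rewrite eq_porbit_mem.
by rewrite -E.
Qed.

Lemma decomp p : exists R : {set 'I_n}, exists k,
  [/\ transp_prod k p, k + #|R| <= #|mv p| &
      forall z, p z != z -> exists2 r, r \in R & z \in porbit p r].
Proof.
have [m] := ubnP #|mv p|; elim: m p => // m IH p /ltnSE le_s.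
case: (pickP (fun x => p x != x)) => [x px | pid]; last first.
  have p1 : p = 1%g.
    by apply/permP => z; rewrite perm1; apply/eqP; apply/negbFE; exact: pid.
  exists set0, 0; split.
  - apply/existsP; exists [tuple of [::]]; by rewrite p1 big_nil /=.
  - by rewrite cards0.
  - by move=> z; rewrite pid.
set y := (p^-1)%g x.
have pyx : p y = x by rewrite /y permKV.
have yx : y != x by apply: contraNneq px => e; rewrite -{1}e pyx.
set q := (tperm x y * p)%g.
have qE z : q z = p (tperm x y z) by rewrite permM.
have qx : q x = x by rewrite qE tpermL.
have qy : q y = p x by rewrite qE tpermR.
have qo z : x != z -> y != z -> q z = p z by move=> *; rewrite qE tpermD.
have pq : p = (tperm x y * q)%g by rewrite /q mulgA tperm2 mul1g.
have sub : mv q \subset mv p :\ x.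
  apply/subsetP => z; rewrite !inE.
  case: (eqVneq z x) => [->|zx]; first by rewrite qx eqxx.
  case: (eqVneq z y) => [->|zy]; first by rewrite pyx (eq_sym x) yx.
  have xz : x != z by rewrite eq_sym.
  have yz : y != z by rewrite eq_sym.
  by rewrite qo.
have lt_qp : #|mv q| < #|mv p|.
  apply: (leq_ltn_trans (subset_leq_card sub)).
  by rewrite [X in _ < X](cardsD1 x) inE px add1n.
have ltq : #|mv q| < m by apply: leq_trans lt_qp le_s.
have [R' [k' [tq hk gen]]] := IH q ltq.
have porb w z : z \in porbit q w -> z \in porbit p w.
  apply: porbit_sub => z'.
  case: (eqVneq z' x) => [->|z'x]; first by rewrite qx porbit_id.
  case: (eqVneq z' y) => [->|z'y].
    by rewrite qy -{1}pyx; have := mem_porbit p 2 y; rewrite expgS expg1 permM.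
  rewrite qo ?(eq_sym x) ?(eq_sym y) //.
  by have := mem_porbit p 1 z'; rewrite expg1.
have tp : transp_prod k'.+1 p by rewrite pq; apply: transp_prod_cons; rewrite // eq_sym.
case: (eqVneq (p x) y) => [pxy | pxy].
- exists (x |: R'), k'.+1; split => //.
  + have sub2 : mv q \subset mv p :\: [set x; y].
      apply/subsetP => z zq; move/subsetP: sub => /(_ z zq); rewrite !inE => /andP[zx pz].
      rewrite pz andbT negb_or zx /=; apply: contraTneq zq => ->.
      by rewrite inE qy pxy eqxx.
    have c2 : #|[set x; y]| = 2 by rewrite cards2 eq_sym yx.
    have s2 : [set x; y] \subset mv p.
      by apply/subsetP => z; rewrite !inE => /orP[] /eqP ->; rewrite ?px // pyx eq_sym.
    have := subset_leq_card sub2; rewrite cardsD (setIidPr s2) c2 => h.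
    have := subset_leq_card s2; rewrite c2 => h2.
    rewrite cardsU1; move: (x \notin R') => b; case: b => /=; move: hk h h2; set a := #|mv q|; set b := #|mv p|; set c := #|R'|; lia.
  + move=> z pz; case: (eqVneq (q z) z) => qz; last first.
      by have [r rR zr] := gen z qz; exists r; [rewrite setU1r | apply: porb].
    exists x; first by rewrite setU11.
    case: (eqVneq z x) => [->|zx]; first exact: porbit_id.
    case: (eqVneq z y) => [->|zy].
      by rewrite -pxy; have := mem_porbit p 1 x; rewrite expg1.
    by move: pz; rewrite -qo ?qz ?eqxx // eq_sym.
- exists R', k'.+1; split => //.
  + lia.
  + have yq : q y != y by rewrite qy.
    have [r rR yr] := gen y yq.
    have yr' := porb _ _ yr.
    move=> z pz; case: (eqVneq (q z) z) => qz; last first.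
      by have [r' rR' zr] := gen z qz; exists r' => //; apply: porb.
    exists r => //.
    case: (eqVneq z x) => [->|zx].
      have /eqP E : porbit p y == porbit p r by rewrite eq_porbit_mem.
      by rewrite -E -pyx; have := mem_porbit p 1 y; rewrite expg1.
    case: (eqVneq z y) => [zy|zy]; first by move: qz; rewrite zy qy => /eqP; rewrite (negbTE pxy).
    by move: pz; rewrite -qo ?qz ?eqxx // eq_sym.
Qed.

Lemma cent_bound p (R : {set 'I_n}) :
  (forall z, p z != z -> exists2 r, r \in R & z \in porbit p r) ->
  #|('C_(Sn n)[p])%g| <= (n - #|mv p|)`! * n ^ #|R|.
Proof.
move=> gen.
set F := ~: mv p.
pose phi (g : 'S_n) := (restr_perm F g, [ffun j : 'I_#|R| => g (enum_val j)]).
have comX g i z : g \in ('C_(Sn n)[p])%g -> g ((p ^+ i)%g z) = (p ^+ i)%g (g z).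
  move=> /setIP[_ /cent1P cg].
  have := commuteX i cg => cgi.
  by rewrite -!permM cgi.
have nF g : g \in ('C_(Sn n)[p])%g -> g \in ('N(F | 'P))%g.
  move=> gC; apply/astabsP => x /=.
  rewrite apermE !inE !negbK.
  have := comX g 1 x gC; rewrite expg1 => e.
  by apply/eqP/eqP => h; [apply: (@perm_inj _ g); rewrite e h | rewrite -e h].
have inj : {in ('C_(Sn n)[p])%g &, injective phi}.
  move=> g1 g2 g1C g2C [e1 e2]; apply/permP => z.
  case: (boolP (z \in F)) => zF.
    by rewrite -(restr_permE (nF _ g1C) zF) e1 restr_permE // nF.
  move: zF; rewrite !inE negbK => pz.
  have [r rR /porbitP[i ->]] := gen z pz.
  rewrite !comX //.
  move/ffunP: e2 => /(_ (enum_rank_in rR r)); rewrite !ffunE enum_rankK_in //.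
  by move->.
rewrite -(card_in_imset inj).
have sub : phi @: ('C_(Sn n)[p])%g \subset setX [set s : {perm 'I_n} | perm_on F s] [set: {ffun 'I_#|R| -> 'I_n}].
  by apply/subsetP => _ /imsetP[g _ ->]; rewrite !inE restr_perm_on.
apply: leq_trans (subset_leq_card sub) _.
rewrite cardsX cardsE card_perm cardsT card_ffun !card_ord.
have := cardsC (mv p); rewrite card_ord -/F => h.
have eF : #|F| = n - #|mv p| by move: h; lia.
by rewrite eF.
Qed.
End Comb.
From mathcomp Require Import ring lra.

Lemma ffact_cmp n s m : s <= n -> n ^ m * s ^_ m <= s ^ m * n ^_ m.
Proof.
move=> sn; elim: m => [|m IH]; first by rewrite !expn0 !ffactn0.
have H2 : n * (s - m) <= s * (n - m) by nia.
have := leq_mul IH H2.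
by rewrite mulnACA [X in _ <= X]mulnACA !ffactnSr !expnSr.
Qed.

Section Real.
Variable R : realType.
Local Open Scope ring_scope.

Lemma expR1_le4 : expR (1 : R) <= 4.
Proof.
have h1 := expR_ge1Dx (- (2^-1) : R).
have h2 := expRxMexpNx_1 (2^-1 : R).
have h3 : 0 < expR (2^-1 : R) := expR_gt0 _.
have h4 : expR (2^-1 : R) <= 2 by nra.
have eE : expR (1 : R) = expR (2^-1) ^+ 2 by rewrite -expRM_natl divff // pnatr_eq0.
rewrite eE expr2; nra.
Qed.

Lemma expR_nat_le (T : nat) : expR (T%:R : R) <= 4 ^+ T.
Proof.
rewrite -[T%:R]mulr1 expRM_natl.
apply: lerXn2r; rewrite ?nnegrE ?expR_ge0 //; exact: expR1_le4.
Qed.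

Lemma pow_fact_le (s : nat) : (s ^ s <= 4 ^ s * s`!)%N.
Proof.
rewrite -(ler_nat R) natrM !natrX.
case: s => [|m]; first by rewrite !expr0 mul1r.
have := @expR_ge1Dxn R (m.+1%:R) m (ler0n _ _).
have hf : (0 : R) < (m.+1)`!%:R by rewrite ltr0n fact_gt0.
move=> h.
have h' : (m.+1%:R : R) ^+ m.+1 / (m.+1)`!%:R <= 4 ^+ m.+1.
  apply: le_trans (expR_nat_le m.+1); lra.
by rewrite ler_pdivrMr // in h'.
Qed.

Lemma fact_ratio n s : (s <= n)%N -> (n ^ s * (n - s)`! <= 4 ^ s * n`!)%N.
Proof.
move=> sn.
have h1 := ffact_cmp s sn; rewrite ffactnn in h1.
have h2 := pow_fact_le s.
have h3 : (n ^ s * s`! <= (4 ^ s * n ^_ s) * s`!)%N.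
  apply: leq_trans h1 _; rewrite mulnAC; exact: leq_mul h2 (leqnn _).
rewrite leq_pmul2r ?fact_gt0 // in h3.
by rewrite -(ffact_fact sn) mulnA; apply: leq_mul h3 (leqnn _).
Qed.

Lemma big_bound n d T (a : R) :
  expR (- a) * Num.sqrt (n`!%:R) < d%:R -> a < T%:R -> (n`! < (4 ^ T * d) ^ 2)%N.
Proof.
move=> hb ha.
have e0 : 0 < expR a := expR_gt0 a.
rewrite expRN ltr_pdivrMl // in hb.
have h2 : expR a <= 4 ^+ T.
  apply: le_trans (expR_nat_le T); rewrite ler_expR; exact: ltW.
have h3 : Num.sqrt (n`!%:R : R) < 4 ^+ T * d%:R.
  apply: lt_le_trans hb _; apply: ler_wpM2r => //.
rewrite -(ltr_nat R) natrX natrM natrX.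
rewrite -{1}(sqr_sqrtr (ler0n R n`!)).
rewrite ltr_pXn2r // ?nnegrE ?sqrtr_ge0 //.
by apply: mulr_ge0 => //; apply: exprn_ge0.
Qed.
End Real.

Local Open Scope ring_scope.

Theorem lemma7 (R : realType) :
  exists A : algC, (0 < A)%R /\
  exists N : nat, forall n : nat, (N <= n)%N ->
    forall (i : Iirr (Sn n)), big R i ->
    forall pi : 'S_n,
      (Num.sqrt (n%:R : R) * ln (n%:R : R) < (tmin pi)%:R)%R ->
      (`|'chi_i pi / 'chi_i 1%g| <= A ^+ tmin pi * (sqrtC (n%:R : algC)) ^- tmin pi)%R.
Proof.
exists 16%:R; split; first by rewrite ltr0n.
exists 0%N => n _ i hbig pi hT.
have [RR [k [tk hk gen]]] := decomp pi.
have [Tk tT] : (tmin pi <= k)%N /\ transp_prod (tmin pi) pi.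
  by rewrite /tmin; case: ex_minnP => m Pm minm; split => //; apply: minm.
set T := tmin pi in Tk tT hT *.
set s := #|mv pi| in hk.
have sT : (s <= 2 * T)%N := transp_prod_size tT.
have sn : (s <= n)%N by rewrite /s -[X in (_ <= X)%N](card_ord n) max_card.
have cent := cent_bound gen.
have T0 : (0 < T)%N.
  rewrite -(ltr_nat R); apply: le_lt_trans hT.
  case: n {hbig cent sn gen k tk hk Tk tT s sT T i RR} pi => [|n'] _.
    by rewrite sqrtr0 mul0r.
  by apply: mulr_ge0; [apply: sqrtr_ge0 | apply: ln_ge0; rewrite ler1n].
have n0 : (0 < n)%N by lia.
set d := dim_irr i.
have hbb := big_bound hbig hT.
have chain : (#|('C_(Sn n)[pi])%g| * n ^ T <= 4 ^ T * 4 ^ T * (4 ^ T * d) ^ 2)%N.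
  apply: leq_trans (leq_mul cent (leqnn _)) _.
  rewrite -mulnA -expnD.
  apply: (@leq_trans ((n - s)`! * n ^ s)).
    by apply: leq_mul (leqnn _) (leq_pexp2l n0 _); lia.
  rewrite mulnC; apply: leq_trans (fact_ratio R sn) _.
  apply: leq_mul; last exact: ltnW.
  by rewrite -expnD leq_pexp2l //; lia.
have d1 : 'chi_i 1%g = d%:R by rewrite /d /dim_irr truncnK ?Cnat_irr1.
have d0 : (0 : algC) < d%:R by rewrite -d1 irr1_gt0.
have orth : `|'chi_i pi| ^+ 2 <= #|('C_(Sn n)[pi])%g|%:R.
  have := second_orthogonality_relation pi (_ : pi \in Sn n).
  rewrite class_refl mulr1n => <-; last by rewrite inE.
  rewrite (bigD1 i) //= normCK lerDl.
  by apply: sumr_ge0 => j _; apply: mul_conjC_ge0.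
have key : `|'chi_i pi| ^+ 2 * n%:R ^+ T <= (16%:R ^+ T) ^+ 2 * d%:R ^+ 2 :> algC.
  apply: le_trans (ler_wpM2r _ orth) _; first exact: exprn_ge0.
  have := chain; rewrite -(ler_nat algC) !natrM !natrX => h.
  apply: le_trans h _; rewrite le_eqVlt; apply/orP; left; apply/eqP.
  rewrite (_ : 16%:R = 4%:R * 4%:R :> algC); last by rewrite -natrM.
  rewrite exprMn; ring.
rewrite d1 normrM normfV normr_nat.
have sq0 : (0 : algC) < sqrtC n%:R by rewrite sqrtC_gt0 ltr0n.
have eS : (sqrtC n%:R ^- T) ^+ 2 = (n%:R ^+ T)^-1 :> algC.
  by rewrite exprVn -exprM mulnC exprM sqrtCK.
rewrite -(ler_pXn2r (n:=2)) // ?nnegrE; first last.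
- by apply: mulr_ge0; [apply: exprn_ge0 | rewrite invr_ge0 exprn_ge0 // ltW].
- by apply: divr_ge0 => //; apply: ltW.
rewrite expr_div_n exprMn eS ler_pdivrMr ?exprn_gt0 // mulrAC ler_pdivlMr ?exprn_gt0 ?ltr0n //.
Qed.
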